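(* Let $a$ and $b$ be positive integers. There exists a graph $G$ with $\gamma^{LD}(G)=a$ and $\gamma^{DLD}(G)=b$ if and only if $$0\le b-a\le 2^a-1-\binom{a}{\lceil a/2\rceil}.$$
   Context: Graphs are finite, simple and undirected, and need not be connected. For a vertex $u$, $N(u)$ is its set of neighbours and $N[u]=N(u)\cup\{u\}$. A code is a non-empty subset $C$ of the vertex set $V$; $I(C;u)=N[u]\cap C$. A code $C$ is locating-dominating if for all distinct $u,v\in V\setminus C$ we have $I(C;u)\neq\emptyset$ and $I(C;u)\ne I(C;v)$. A code $C$ is solid-locating-dominating if $I(C;u)\ne\emptyset$ for every $u\in V\setminus C$ and $I(C;u)\not\subseteq I(C;v)$ for all distinct $u,v\in V\setminus C$. $\gamma^{LD}(G)$ and $\gamma^{DLD}(G)$ are the minimum sizes of a locating-dominating and a solid-locating-dominating code in $G$. *)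

(* Defs.v *)
(* A finite simple undirected graph is a finType T with a
   symmetric irreflexive edge relation e : rel T. *)
From mathcomp Require Import all_boot.
Set Implicit Arguments. Unset Strict Implicit. Unset Printing Implicit Defensive.

Section Codes.
Variables (T : finType) (e : rel T).

Definition cnbhd (u : T) : {set T} := [set v | e u v] :|: [set u].

Definition Iset (C : {set T}) (u : T) : {set T} := cnbhd u :&: C.

Definition is_LD (C : {set T}) : bool :=
  [&& C != set0,
      [forall u, (u \notin C) ==> (Iset C u != set0)] &
      [forall u, forall v,
         [&& u \notin C, v \notin C & u != v] ==> (Iset C u != Iset C v)]].

Definition is_DLD (C : {set T}) : bool :=
  [&& C != set0,
      [forall u, (u \notin C) ==> (Iset C u != set0)] &
      [forall u, forall v,
         [&& u \notin C, v \notin C & u != v] ==> ~~ (Iset C u \subset Iset C v)]].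

(* minimum size of a code with the property; V itself is always such a code
   when V is nonempty, so #|T| is a harmless default for the min *)
Definition gammaLD : nat :=
  \big[minn/#|T|]_(C : {set T} | is_LD C) #|C|.

Definition gammaDLD : nat :=
  \big[minn/#|T|]_(C : {set T} | is_DLD C) #|C|.

End Codes.

(* Main.v *)
Require Import Defs.
From mathcomp Require Import all_boot.
From mathcomp Require Import all_fingroup zify.
Set Implicit Arguments. Unset Strict Implicit. Unset Printing Implicit Defensive.



Lemma perm_onto (T : finType) (A B : {set T}) :
  #|A| = #|B| -> exists t : {perm T}, t @: A = B.
Proof.
move: {2}#|A :\: B| (erefl #|A :\: B|) => k; elim: k A => [|k IH] A hk hAB.
  exists 1%g. have sAB : A \subset B by rewrite -setD_eq0 -cards_eq0 hk.
  have -> : A = B by apply/eqP; rewrite eqEcard sAB hAB leqnn.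
  by rewrite (eq_imset _ (@perm1 T)) imset_id.
have : 0 < #|A :\: B| by rewrite hk.
rewrite card_gt0 => /set0Pn [x]; rewrite inE => /andP [xB xA].
have : 0 < #|B :\: A|.
  move: hk; rewrite !cardsD hAB setIC; lia.
rewrite card_gt0 => /set0Pn [y]; rewrite inE => /andP [yA yB].
pose t := tperm x y.
have [t' ht'] : exists t' : {perm T}, t' @: (t @: A) = B.
  apply: IH; last by rewrite card_imset //; exact: perm_inj.
  have -> : (t @: A) :\: B = (A :\: B) :\ x.
    apply/setP=> z; rewrite !inE; apply/andP/and3P.
      move=> [zB /imsetP [w wA zw]]; subst z.
      move: zB; rewrite /t; case: (tpermP x y w) => [wx|wy|nx ny] zB.
      - by rewrite yB in zB.
      - by rewrite -wy wA in yA.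
      - by split => //; apply/eqP.
    move=> [zx zB zA]; split => //; apply/imsetP; exists z => //.
    rewrite /t tpermD //; first by rewrite eq_sym.
    by apply/eqP => yz; rewrite -yz yB in zB.
  by move: hk; rewrite (cardsD1 x (A :\: B)) !inE xB xA /=; case.
exists (t * t')%g; rewrite -ht' -imset_comp; apply: eq_imset => z /=.
by rewrite permM.
Qed.



Definition pre (n : nat) (s : 'S_n) (j : nat) : {set 'I_n} := s @: [set i : 'I_n | i < j].
Definition Ncount (n : nat) (A : {set 'I_n}) := #|[set s : 'S_n | pre s #|A| == A]|.

Lemma card_lt_set (n : nat) j : j <= n -> #|[set i : 'I_n | i < j]| = j.
Proof.
move=> hj.
have -> : [set i : 'I_n | i < j] = widen_ord hj @: [set: 'I_j].
  apply/setP=> i; rewrite inE; apply/idP/imsetP => [ij|[k _ ->]] /=.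
    by exists (Ordinal ij); rewrite ?inE //; apply: val_inj.
  exact: ltn_ord.
by rewrite card_imset ?cardsT ?card_ord //; by move=> x y /(congr1 val) /= /val_inj.
Qed.

Lemma pre_card (n : nat) (s : 'S_n) j : j <= n -> #|pre s j| = j.
Proof. by move=> hj; rewrite card_imset ?card_lt_set //; exact: perm_inj. Qed.

Lemma pre_mono (n : nat) (s : 'S_n) j j' : j <= j' -> pre s j \subset pre s j'.
Proof.
move=> hj; apply: imsetS; apply/subsetP => i; rewrite !inE => h.
exact: leq_trans h hj.
Qed.

Lemma N_le (n : nat) (A B : {set 'I_n}) : #|A| = #|B| -> Ncount A <= Ncount B.
Proof.
move=> hAB; have [t ht] := perm_onto hAB.
rewrite /Ncount -(card_imset _ (mulIg t)).
apply: subset_leq_card; apply/subsetP => u /imsetP [s]; rewrite !inE => /eqP hs ->.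
rewrite -hAB; move: hs; set j := #|A| => hs; rewrite -ht -hs /pre -imset_comp; apply/eqP; apply: eq_imset => z /=.
by rewrite permM.
Qed.

Lemma Ncount_sum1 (n : nat) (A : {set 'I_n}) : Ncount A = \sum_(s : 'S_n | pre s #|A| == A) 1.
Proof. by rewrite sum1_card /Ncount cardsE. Qed.

Lemma N_sum (n : nat) j : j <= n -> \sum_(B : {set 'I_n} | #|B| == j) Ncount B = n`!.
Proof.
move=> hj.
rewrite (eq_bigr (fun B => \sum_(s : 'S_n | pre s j == B) 1)); last first.
  by move=> B /eqP hB; rewrite Ncount_sum1 hB.
rewrite (exchange_big_dep (fun _ => true)) //=.
rewrite -[RHS]card_Sn -sum1_card; apply: eq_bigr => s _.
rewrite (big_pred1 (pre s j)) // => B /=.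
apply/andP/eqP => [[_ /eqP ->]|->] //; split => //; by rewrite pre_card.
Qed.

Lemma N_mul (n : nat) (A : {set 'I_n}) : Ncount A * 'C(n, #|A|) = n`!.
Proof.
have hA : #|A| <= n by move: (max_card A); rewrite card_ord.
rewrite -(N_sum hA).
rewrite (eq_bigr (fun _ => Ncount A)); last first.
  move=> B /eqP hB; apply/eqP; rewrite eqn_leq !N_le //.
rewrite sum_nat_const mulnC; congr (_ * _).
by rewrite -[X in 'C(X, _)]card_ord -card_draws cardsE.
Qed.

Lemma uphalf_facts (n : nat) : uphalf n + half n = n /\ half n <= uphalf n.
Proof.
rewrite uphalf_half; have := odd_double_half n; rewrite -addnn.
case: (odd n) => /=; lia.
Qed.

Lemma bin_step (n : nat) i : i < uphalf n -> 'C(n, i) <= 'C(n, i.+1).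
Proof.
move=> hi; have [h1 h2] := uphalf_facts n.
have hle : i.+1 <= n - i by lia.
rewrite -(leq_pmul2l (ltn0Sn i)) mul_bin_left.
by rewrite leq_mul2r hle orbT.
Qed.

Lemma bin_le_mid (n : nat) j : 'C(n, j) <= 'C(n, uphalf n).
Proof.
have up : forall l, 'C(n, uphalf n - l) <= 'C(n, uphalf n).
  elim=> [|l IH]; first by rewrite subn0.
  case: (ltnP l (uphalf n)) => hl.
    apply: leq_trans IH; have -> : uphalf n - l = (uphalf n - l.+1).+1 by lia.
    apply: bin_step; lia.
  by have -> : uphalf n - l.+1 = uphalf n - l by lia.
have [h1 h2] := uphalf_facts n.
case: (leqP j (uphalf n)) => hj.
  by have := up (uphalf n - j); rewrite subKn.
case: (leqP j n) => hjn; last by rewrite bin_small.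
rewrite -bin_sub //; have := up (uphalf n - (n - j)); rewrite subKn //; lia.
Qed.

Lemma sperner (n : nat) (Ac : {set {set 'I_n}}) :
  (forall A B, A \in Ac -> B \in Ac -> A \subset B -> A = B) ->
  #|Ac| <= 'C(n, uphalf n).
Proof.
move=> anti.
have H1 : \sum_(A in Ac) Ncount A <= n`!.
  rewrite (eq_bigr (fun A : {set 'I_n} => \sum_(s : 'S_n | pre s #|A| == A) 1)); last first.
    by move=> A _; rewrite Ncount_sum1.
  rewrite (exchange_big_dep (fun _ => true)) //= -card_Sn -sum1_card.
  apply: leq_sum => s _.
  rewrite sum1_card; apply/card_le1_eqP => A B; rewrite !unfold_in /=.
  move=> /andP [Ac' /eqP hA] /andP [Bc /eqP hB].
  suff E : A = B by rewrite E.
  case: (leqP #|A| #|B|) => hle.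
    apply: anti => //; rewrite -hA -hB; exact: pre_mono.
  apply/esym; apply: anti => //; rewrite -hA -hB; apply: pre_mono; exact: ltnW.
have H2 : #|Ac| * n`! <= \sum_(A in Ac) Ncount A * 'C(n, uphalf n).
  rewrite -sum1_card big_distrl /=; apply: leq_sum => A _.
  rewrite mul1n -(N_mul A); apply: leq_mul => //; exact: bin_le_mid.
rewrite -(leq_pmul2r (fact_gt0 n)); apply: (leq_trans H2).
rewrite -big_distrl /= mulnC; exact: leq_mul.
Qed.



Lemma bigmin_le (I : finType) (P : pred I) (f : I -> nat) x0 i :
  P i -> \big[minn/x0]_(j | P j) f j <= f i.
Proof.
move=> Pi; rewrite /index_iota.
have : i \in index_enum I by rewrite mem_index_enum.
elim: (index_enum I) => [//|j r IH]; rewrite inE big_cons => /orP [/eqP <-|ir].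
  by rewrite Pi geq_minl.
case: (P j); last exact: IH.
exact: leq_trans (geq_minr _ _) (IH ir).
Qed.

Lemma bigmin_ge (I : finType) (P : pred I) (f : I -> nat) x0 n :
  n <= x0 -> (forall i, P i -> n <= f i) -> n <= \big[minn/x0]_(j | P j) f j.
Proof. move=> h0 h; elim/big_ind: _ => // x y hx hy; by rewrite leq_min hx hy. Qed.

Lemma bigmin_attained (I : finType) (P : pred I) (f : I -> nat) x0 :
  (exists i, P i) -> (forall i, P i -> f i <= x0) ->
  exists i, P i /\ \big[minn/x0]_(j | P j) f j = f i.
Proof.
move=> [i0 Pi0] hle.
have : \big[minn/x0]_(j | P j) f j = x0 \/ exists i, P i /\ \big[minn/x0]_(j | P j) f j = f i.
  elim/big_ind: _ => [|x y hx hy|i Pi]; [by left| |by right; exists i].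
  by case: (leqP x y).
case=> [h|//]; exists i0; split => //.
apply/eqP; rewrite eqn_leq bigmin_le //= h; exact: hle.
Qed.


Lemma in_Iset (T : finType) (e : rel T) C u x :
  (x \in Iset e C u) = ((e u x) || (x == u)) && (x \in C).
Proof. by rewrite /Iset /cnbhd !inE. Qed.

Lemma DLD_LD (T : finType) (e : rel T) C : is_DLD e C -> is_LD e C.
Proof.
case/and3P => h1 h2 /forallP h3; apply/and3P; split => //.
apply/forallP => u; apply/forallP => v; apply/implyP => huv.
have := implyP (forallP (h3 u) v) huv.
by apply: contra => /eqP ->.
Qed.

Lemma gammaLD_le (T : finType) (e : rel T) C : is_LD e C -> gammaLD e <= #|C|.
Proof. exact: bigmin_le. Qed.

Lemma gammaDLD_le (T : finType) (e : rel T) C : is_DLD e C -> gammaDLD e <= #|C|.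
Proof. exact: bigmin_le. Qed.

Lemma setT_LD (T : finType) (e : rel T) : 0 < #|T| -> is_LD e setT.
Proof.
move=> hT; apply/and3P; split.
- by rewrite -card_gt0 cardsT.
- by apply/forallP => u; rewrite inE.
- by apply/forallP => u; apply/forallP => v; rewrite inE.
Qed.

Lemma setT_DLD (T : finType) (e : rel T) : 0 < #|T| -> is_DLD e setT.
Proof.
move=> hT; apply/and3P; split.
- by rewrite -card_gt0 cardsT.
- by apply/forallP => u; rewrite inE.
- by apply/forallP => u; apply/forallP => v; rewrite inE.
Qed.

Lemma gammaLD_attained (T : finType) (e : rel T) :
  0 < gammaLD e -> exists C, is_LD e C /\ #|C| = gammaLD e.
Proof.
move=> h.
have hT : 0 < #|T|.
  case: (posnP #|T|) => // h0; move: h; rewrite /gammaLD.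
  suff : \big[minn/#|T|]_(C | is_LD e C) #|C| <= #|T| by rewrite h0 leqn0 => /eqP ->.
  elim/big_ind: _ => [//|x y hx _|C _]; [exact: leq_trans (geq_minl _ _) hx|exact: max_card].
have hex : exists C : {set T}, is_LD e C by exists setT; exact: setT_LD.
have [C [hC hCeq]] := @bigmin_attained _ _ (fun C : {set T} => #|C|) #|T| hex (fun C _ => max_card C).
by exists C; split => //; rewrite -hCeq.
Qed.

Lemma gammaDLD_attained (T : finType) (e : rel T) :
  0 < gammaDLD e -> exists C, is_DLD e C /\ #|C| = gammaDLD e.
Proof.
move=> h.
have hT : 0 < #|T|.
  case: (posnP #|T|) => // h0; move: h; rewrite /gammaDLD.
  suff : \big[minn/#|T|]_(C | is_DLD e C) #|C| <= #|T| by rewrite h0 leqn0 => /eqP ->.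
  elim/big_ind: _ => [//|x y hx _|C _]; [exact: leq_trans (geq_minl _ _) hx|exact: max_card].
have hex : exists C : {set T}, is_DLD e C by exists setT; exact: setT_DLD.
have [C [hC hCeq]] := @bigmin_attained _ _ (fun C : {set T} => #|C|) #|T| hex (fun C _ => max_card C).
by exists C; split => //; rewrite -hCeq.
Qed.


Lemma card_nonk (T : finType) (C : {set T}) k : 0 < k ->
  #|[set S : {set T} | [&& S \subset C, S != set0 & #|S| != k]]|
    = 2 ^ #|C| - 1 - 'C(#|C|, k).
Proof.
move=> hk.
set Y := [set S : {set T} | _].
pose Q := [set S : {set T} | (S \subset C) && (#|S| != k)].
pose Pk := [set S : {set T} | (S \subset C) && (#|S| == k)].
have h1 : #|Pk| + #|Q| = 2 ^ #|C|.
  rewrite -card_powerset -(cardsID [set S : {set T} | #|S| == k] (powerset C)).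
  have -> : Pk = powerset C :&: [set S : {set T} | #|S| == k].
    by apply/setP => S; rewrite !inE.
  have -> : Q = powerset C :\: [set S : {set T} | #|S| == k].
    by apply/setP => S; rewrite !inE andbC.
  by [].
have h2 : #|Pk| = 'C(#|C|, k) by rewrite cards_draws.
have h3 : #|Q| = 1 + #|Y|.
  rewrite (cardsD1 set0 Q) !inE sub0set cards0 eq_sym (gtn_eqF hk) /=.
  congr (_ + _); apply: eq_card => S; rewrite !inE.
  by rewrite [X in _ = X]andbCA.
lia.
Qed.

Lemma DLD_upper (T : finType) (e : rel T) (C : {set T}) : is_LD e C ->
  exists D, is_DLD e D /\ #|D| <= #|C| + (2 ^ #|C| - 1 - 'C(#|C|, uphalf #|C|)).
Proof.
move=> hLD; have := hLD; case/and3P => hC0 /forallP hdom /forallP hsep.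
set k := uphalf #|C|.
have hk : 0 < k by rewrite /k; move: hC0; rewrite -card_gt0; case: #|C| => //.
pose X := [set u | (u \notin C) && (#|Iset e C u| != k)].
pose D := C :|: X.
have sCD : C \subset D by rewrite subsetUl.
have notD u : u \notin D -> (u \notin C) /\ #|Iset e C u| = k.
  rewrite !inE negb_or => /andP [uC]; rewrite uC /= negbK => /eqP h; by [].
have IDC u : Iset e D u :&: C = Iset e C u.
  by rewrite /Iset -setIA (setIidPr sCD).
exists D; split.
  apply/and3P; split.
  - apply: contraNneq hC0 => hD; rewrite -subset0 -hD; exact: sCD.
  - apply/forallP => u; apply/implyP => /notD [uC _].
    have := implyP (hdom u) uC; apply: contraNneq => h0.
    by rewrite -subset0 -h0 /Iset setIS.
  - apply/forallP => u; apply/forallP => v; apply/implyP => /and3P [uD vD uv].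
    have [uC hu] := notD u uD; have [vC hv] := notD v vD.
    have hne := implyP (forallP (hsep u) v) (introT and3P (And3 uC vC uv)).
    apply: contra hne => hs.
    have hs' : Iset e C u \subset Iset e C v by rewrite -!IDC setSI.
    by rewrite eqEcard hs' hu hv leqnn.
have hX : #|X| <= 2 ^ #|C| - 1 - 'C(#|C|, k).
  rewrite -card_nonk // -(card_in_imset (f := Iset e C)).
    apply: subset_leq_card; apply/subsetP => S /imsetP [u]; rewrite /X inE => /andP [uC hu] ->.
    rewrite inE; apply/and3P; split => //.
    - by rewrite /Iset subsetIr.
    - exact: implyP (hdom u) uC.
  move=> u v; rewrite /X !inE => /andP [uC _] /andP [vC _] huv.
  apply/eqP; apply: contraT => uv.
  have := implyP (forallP (hsep u) v) (introT and3P (And3 uC vC uv)).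
  by rewrite huv eqxx.
apply: leq_trans (leq_card_setU C X) _; exact: leq_add.
Qed.

Lemma forward (T : finType) (e : rel T) a b : 0 < a -> 0 < b ->
  gammaLD e = a -> gammaDLD e = b ->
  a <= b /\ b - a <= 2 ^ a - 1 - 'C(a, uphalf a).
Proof.
move=> ha hb hLD hDLD.
have [C [hC hCa]] := gammaLD_attained (e := e) (ltac:(by rewrite hLD)).
have [D' [hD' hD'b]] := gammaDLD_attained (e := e) (ltac:(by rewrite hDLD)).
split.
  by rewrite -hLD -hDLD -hD'b; apply: gammaLD_le; exact: DLD_LD.
have [D [hD hDs]] := DLD_upper hC.
have := gammaDLD_le hD; rewrite hDLD => h.
move: hDs; rewrite hCa hLD => hDs; lia.
Qed.


Definition antichain (T : finType) (A : {set {set T}}) :=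
  forall S S', S \in A -> S' \in A -> S \subset S' -> S = S'.

Definition sF (a : nat) (F : {set {set 'I_a}}) := {S : {set 'I_a} | S \in F}.
Definition VT (a : nat) (F : {set {set 'I_a}}) : finType := ('I_a + sF F)%type.
Definition ge (a : nat) (F : {set {set 'I_a}}) : rel (VT F) := fun x y =>
  match x, y with
  | inl i, inl j => i != j
  | inl i, inr X => i \in val X
  | inr X, inl i => i \in val X
  | inr _, inr _ => false
  end.

Lemma ge_sym a (F : {set {set 'I_a}}) : symmetric (@ge a F).
Proof. by move=> [i|X] [j|X'] //=; rewrite eq_sym. Qed.

Lemma ge_irr a (F : {set {set 'I_a}}) : irreflexive (@ge a F).
Proof. by move=> [i|X] //=; rewrite eqxx. Qed.

Lemma card_VT a (F : {set {set 'I_a}}) : #|VT F| = a + #|F|.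
Proof. by rewrite /VT card_sum card_ord /sF card_sig; congr (_ + _); apply: eq_card. Qed.

Definition Cc (a : nat) (F : {set {set 'I_a}}) : {set VT F} := inl @: [set: 'I_a].

Lemma in_Cc_l a (F : {set {set 'I_a}}) i : (inl i : VT F) \in Cc F.
Proof. by apply/imsetP; exists i. Qed.

Lemma in_Cc_r a (F : {set {set 'I_a}}) (X : sF F) : (inr X : VT F) \in Cc F = false.
Proof. by apply/negbTE/imsetP => [[i _]]. Qed.

Lemma card_Cc a (F : {set {set 'I_a}}) : #|Cc F| = a.
Proof. by rewrite card_imset ?cardsT ?card_ord //; move=> i j []. Qed.

Lemma LD_Cc a (F : {set {set 'I_a}}) : 0 < a -> (forall X, X \in F -> X != set0) ->
  is_LD (@ge a F) (Cc F).
Proof.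
move=> ha hF; apply/and3P; split.
- by apply/set0Pn; exists (inl (Ordinal ha)); rewrite in_Cc_l.
- apply/forallP => [[i|X]]; first by rewrite in_Cc_l.
  rewrite in_Cc_r /=; have /set0Pn [j jX] := hF _ (valP X).
  by apply/set0Pn; exists (inl j); rewrite in_Iset /= jX in_Cc_l.
- apply/forallP => [[i|X]]; apply/forallP => [[j|X']]; rewrite ?in_Cc_l ?andbF //=.
  rewrite !in_Cc_r /=; apply/implyP; apply: contra => /eqP hI; apply/eqP; congr inr; apply: val_inj.
  apply/setP => j; have := congr1 (fun Z : {set VT F} => (inl j : VT F) \in Z) hI.
  rewrite /= !in_Iset /= in_Cc_l !andbT. by rewrite !orbF.
Qed.

Lemma LD_lower a (F : {set {set 'I_a}}) : (forall i, [set i] \in F) ->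
  forall C, is_LD (@ge a F) C -> a <= #|C|.
Proof.
move=> hS C /and3P [_ /forallP hdom _].
pose si i : sF F := exist _ [set i] (hS i).
pose f i : VT F := if (inr (si i) : VT F) \in C then inr (si i) else inl i.
have fC : forall i, f i \in C.
  move=> i; rewrite /f; case: ifP => // hi.
  have := implyP (hdom (inr (si i))) (negbT hi) => /set0Pn [y].
  rewrite in_Iset; case: y => [j|Y] /=.
    by rewrite inE orbF => /andP [/eqP <-].
  by move=> /andP [/eqP ->]; rewrite hi.
have finj : injective f.
  move=> i j; rewrite /f; case: ifP; case: ifP => // _ _.
    by move=> [] /set1_inj.
  by case.
have h1 : #|f @: [set: 'I_a]| = a by rewrite card_imset // cardsT card_ord.
apply: leq_trans (eq_leq (esym h1)) _.
by apply: subset_leq_card; apply/subsetP => x /imsetP [i _ ->].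
Qed.

Lemma DLD_lower a (F : {set {set 'I_a}}) (w : nat) :
  (forall A : {set {set 'I_a}}, A \subset F -> antichain A -> #|A| <= w) -> a <= w ->
  forall D, is_DLD (@ge a F) D -> a + #|F| - w <= #|D|.
Proof.
move=> hw haw D /and3P [_ _ /forallP hsep].
suff : #|~: D| <= w by rewrite -(card_VT F) -(cardsC D); lia.
have sep u v : u \notin D -> v \notin D -> u != v -> ~~ (Iset (@ge a F) D u \subset Iset (@ge a F) D v).
  by move=> uD vD uv; apply: (implyP (forallP (hsep u) v)); rewrite uD vD uv.
case: (boolP [exists i, (inl i : VT F) \notin D]) => [/existsP [i iD]|].
  apply: leq_trans haw; apply: (leq_trans _ (eq_leq (card_Cc F))); apply: subset_leq_card.
  apply/subsetP => [[j|X]]; rewrite inE ?in_Cc_l // in_Cc_r => XD.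
  have := sep _ _ XD iD isT; apply: contraR => _.
  apply/subsetP => y; rewrite !in_Iset; case: y => [j|Y] /=.
    move=> /andP [_ ->]; rewrite andbT.
    by case: (eqVneq i j) => [->|ij]; [rewrite eqxx orbT|apply/orP; left].
  by move=> /andP [/eqP [->] h]; rewrite h in XD.
rewrite negb_exists => /forallP hl.
pose Xs := [set X : sF F | (inr X : VT F) \notin D].
pose A := val @: Xs.
have hA : A \subset F by apply/subsetP => Z /imsetP [X _ ->]; exact: valP.
have antiA : antichain A.
  move=> Z Z' /imsetP [X XX ->] /imsetP [X' XX' ->] hs.
  apply/eqP; apply: contraT => hne.
  have XX'ne : (inr X : VT F) != inr X'.
    by apply: contra hne => /eqP [->].
  move: XX XX'; rewrite !inE => XD X'D.
  have := sep _ _ XD X'D XX'ne; apply: contraR => _.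
  apply/subsetP => y; rewrite !in_Iset; case: y => [j|Y] /=.
    move=> /andP [h ->]; rewrite andbT; case/orP: h => [jX|/eqP //].
    by rewrite (subsetP hs _ jX).
  by move=> /andP [/eqP [->] h]; rewrite h in XD.
apply: leq_trans (hw _ hA antiA).
rewrite card_imset; last exact: val_inj.
have -> : ~: D = inr @: Xs.
  apply/setP => [[i|X]]; rewrite inE.
    have := hl i; rewrite negbK => ->; apply/esym/negbTE/imsetP => [[X _]] //.
  apply/idP/imsetP => [XD|[X' hX' [->]]]; first by exists X; rewrite ?inE.
  by move: hX'; rewrite inE.
by rewrite card_imset //; move=> X X' [].
Qed.

Lemma DLD_code a (F : {set {set 'I_a}}) (A0 : {set {set 'I_a}}) :
  0 < a -> (forall X, X \in F -> X != set0) -> A0 \subset F -> antichain A0 ->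
  exists D, is_DLD (@ge a F) D /\ #|D| = a + #|F| - #|A0|.
Proof.
move=> ha hF hA0 anti.
pose Xs := [set X : sF F | val X \in A0].
have cXs : #|Xs| = #|A0|.
  rewrite -(card_imset _ val_inj); apply: eq_card => Z.
  apply/imsetP/idP => [[X]|ZA]; first by rewrite inE => h ->.
  by exists (exist _ Z (subsetP hA0 _ ZA)); rewrite ?inE.
pose D := ~: ((@inr 'I_a (sF F)) @: Xs).
have inDl i : (inl i : VT F) \in D by rewrite inE; apply/imsetP => [[X _]].
have inDr X : ((inr X : VT F) \in D) = (val X \notin A0).
  rewrite inE; congr negb; apply/imsetP/idP => [[X' hX' [->]]|h]; first by rewrite inE in hX'.
  by exists X; rewrite ?inE.
exists D; split; last first.
  have := cardsC D; rewrite card_VT.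
  have -> : #|~: D| = #|A0| by rewrite setCK card_imset // => X X' [].
  by move=> <-; rewrite addnK.
apply/and3P; split.
- by apply/set0Pn; exists (inl (Ordinal ha)).
- apply/forallP => [[i|X]]; first by rewrite inDl.
  rewrite inDr negbK; apply/implyP => XA; have /set0Pn [j jX] := hF _ (valP X).
  by apply/set0Pn; exists (inl j); rewrite in_Iset /= jX inDl.
- apply/forallP => [[i|X]]; apply/forallP => [[j|X']]; rewrite ?inDl ?andbF //=.
  rewrite !inDr !negbK; apply/implyP => /and3P [XA X'A neq].
  have hne : val X != val X'.
    apply: contra neq => /eqP h; apply/eqP; congr inr; exact: val_inj.
  have : ~~ (val X \subset val X').
    by apply: contra hne => hs; apply/eqP; exact: anti.
  case/subsetPn => j jX jX'.
  apply/subsetPn; exists (inl j).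
    by rewrite in_Iset /= jX inDl.
  by rewrite in_Iset /= (negbTE jX').
Qed.


Lemma construct a (F : {set {set 'I_a}}) (w : nat) : 0 < a ->
  (forall X, X \in F -> X != set0) -> (forall i, [set i] \in F) ->
  (forall A : {set {set 'I_a}}, A \subset F -> antichain A -> #|A| <= w) -> a <= w ->
  (exists A0 : {set {set 'I_a}}, [/\ A0 \subset F, antichain A0 & #|A0| = w]) ->
  exists (T : finType) (e : rel T),
    [/\ symmetric e, irreflexive e, gammaLD e = a & gammaDLD e = a + #|F| - w].
Proof.
move=> ha hF hS hw haw [A0 [hA0 anti cA0]].
exists (VT F), (@ge a F); split.
- exact: ge_sym.
- exact: ge_irr.
- apply/eqP; rewrite eqn_leq; apply/andP; split.
    apply: (leq_trans _ (eq_leq (card_Cc F))); apply: gammaLD_le; exact: LD_Cc.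
  apply: bigmin_ge; first by rewrite card_VT leq_addr.
  move=> C; exact: LD_lower.
- apply/eqP; rewrite eqn_leq; apply/andP; split.
    have [D [hD cD]] := DLD_code ha hF hA0 anti.
    by rewrite -cA0 -cD; exact: gammaDLD_le.
  apply: bigmin_ge; first by rewrite card_VT leq_subr.
  move=> D; exact: DLD_lower.
Qed.

Lemma exists_between (T : finType) (G0 G1 : {set T}) s :
  G0 \subset G1 -> #|G0| <= s -> s <= #|G1| ->
  exists F : {set T}, [/\ G0 \subset F, F \subset G1 & #|F| = s].
Proof.
move=> s01 h0 h1.
suff H : forall n, #|G0| + n <= #|G1| ->
    exists F : {set T}, [/\ G0 \subset F, F \subset G1 & #|F| = #|G0| + n].
  by have := H (s - #|G0|); rewrite subnKC //; apply.
elim=> [|n IH] hn.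
  by exists G0; rewrite addn0.
have hn1 : #|G0| + n <= #|G1| by rewrite addnS in hn; exact: ltnW.
have [F [h0F hF1 cF]] := IH hn1.

have : F \proper G1.
  by rewrite properEcard hF1 cF -addnS.
case/properP => _ [x xG1 xF].
exists (x |: F); split.
- exact: subset_trans h0F (subsetUr _ _).
- by rewrite subUset sub1set xG1.
- by rewrite cardsU1 xF cF addnS.
Qed.


Definition Sing (a : nat) : {set {set 'I_a}} := [set [set i] | i : 'I_a].

Lemma card_Sing a : #|Sing a| = a.
Proof. by rewrite card_imset ?cardsT ?card_ord //; exact: set1_inj. Qed.

Lemma Sing_anti a : antichain (Sing a).
Proof.
move=> X Y /imsetP [i _ ->] /imsetP [j _ ->]; rewrite sub1set => /set1P -> //.
Qed.

Lemma card_allsets a : #|[set: {set 'I_a}]| = 2 ^ a.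
Proof.
rewrite -[in RHS](card_ord a) -cardsT -card_powerset; apply: eq_card => X.
by rewrite !inE subsetT.
Qed.

Lemma regime2 a d : 3 <= a -> a <= d -> d <= 2 ^ a - 1 - 'C(a, uphalf a) ->
  exists (T : finType) (e : rel T),
    [/\ symmetric e, irreflexive e, gammaLD e = a & gammaDLD e = a + d].
Proof.
move=> ha3 had hdm.
have ha : 0 < a by lia.
set k := uphalf a; set m := 'C(a, k).
have hk : 0 < k by rewrite /k uphalf_half; case: (odd a) => //=; lia.
pose Lk := [set X : {set 'I_a} | #|X| == k].
have cLk : #|Lk| = m by rewrite card_draws card_ord.
pose G0 := Sing a :|: Lk.
pose G1 := [set~ (set0 : {set 'I_a})].
have cG0 : #|G0| <= a + m by apply: leq_trans (leq_card_setU (Sing a) Lk) _; rewrite card_Sing cLk.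
have cG1 : #|G1| = 2 ^ a - 1 by rewrite cardsC1 -cardsT card_allsets subn1.
have s01 : G0 \subset G1.
  apply/subsetP => X; rewrite !inE => /orP [/imsetP [i _ ->]|/eqP hX].
    by apply/set0Pn; exists i; rewrite inE.
  by rewrite -card_gt0 hX.
have hs1 : #|G0| <= m + d by lia.
have hs2 : m + d <= #|G1| by rewrite cG1; move: hdm; rewrite -/m; move: (2 ^ a) => p; lia.
have [F [h0F hF1 cF]] := exists_between s01 hs1 hs2.
have hma : a <= m.
  by have := bin_le_mid a 1; rewrite bin1.
have := @construct a F m ha _ _ _ hma _.
rewrite cF.
have -> : a + (m + d) - m = a + d by lia.
apply.
- by move=> X /(subsetP hF1); rewrite !inE.
- move=> i; apply: (subsetP h0F); rewrite !inE; apply/orP; left.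
  by apply/imsetP; exists i.
- move=> A hA anti; exact: sperner anti.
- exists Lk; split => //.
    by apply: subset_trans h0F; exact: subsetUr.
  move=> X Y; rewrite !inE => /eqP hX /eqP hY hs; apply/eqP.
  by rewrite eqEcard hs hX hY leqnn.
Qed.

Lemma regime1 a d : 0 < a -> d < a ->
  exists (T : finType) (e : rel T),
    [/\ symmetric e, irreflexive e, gammaLD e = a & gammaDLD e = a + d].
Proof.
move=> ha hda.
pose i0 : 'I_a := Ordinal ha.
pose P := [set [set i0; j] | j in [set~ i0]].
pose G1 := Sing a :|: P.
have cP : #|P| = a - 1.
  rewrite card_in_imset ?cardsC1 ?card_ord ?subn1 //.
  move=> j j'; rewrite !inE => hj hj' h.
  have : j \in [set i0; j'] by rewrite -h !inE eqxx orbT.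
  by rewrite !inE (negbTE hj) /= => /eqP.
have disj : Sing a :&: P = set0.
  apply/setP => X; rewrite !inE; apply/negbTE; apply/andP => [[/imsetP [i _ ->] /imsetP [j]]].
  rewrite !inE => hj /(congr1 (fun Z : {set 'I_a} => #|Z|)).
  by rewrite cards1 cards2 eq_sym hj.
have cG1 : #|G1| = a + (a - 1) by rewrite cardsU disj cards0 subn0 card_Sing cP.
have s01 : Sing a \subset G1 by exact: subsetUl.
have hs1 : #|Sing a| <= a + d by rewrite card_Sing leq_addr.
have hs2 : a + d <= #|G1| by rewrite cG1; lia.
have [F [h0F hF1 cF]] := exists_between s01 hs1 hs2.
pose g (X : {set 'I_a}) := odflt i0 [pick j in X | j != i0].
have gchar X : X \in G1 -> X = [set g X] \/ X = [set i0; g X].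
  rewrite !inE => /orP [/imsetP [i _ ->]|/imsetP [j]].
    left; rewrite /g; case: pickP => [y /andP [/set1P -> _] //|h] /=.
    by have := h i; rewrite !inE eqxx /= => /negbFE /eqP ->.
  rewrite !inE => hj ->; right; rewrite /g; case: pickP => [y /andP []|h] /=.
    by rewrite !inE => /orP [/eqP ->|/eqP ->]; rewrite ?eqxx.
  by have := h j; rewrite !inE eqxx orbT hj.
have := @construct a F a ha _ _ _ (leqnn a) _.
rewrite cF.
have -> : a + (a + d) - a = a + d by lia.
apply.
- move=> X /(subsetP hF1) /gchar [->|->]; apply/set0Pn; by exists (g X); rewrite !inE eqxx ?orbT.
- move=> i; apply: (subsetP h0F); by apply/imsetP; exists i.
- move=> A hA anti.
  rewrite -(card_in_imset (f := g)); last first.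
    move=> X Y XA YA hg.
    have hX := gchar X (subsetP hF1 _ (subsetP hA _ XA)).
    have hY := gchar Y (subsetP hF1 _ (subsetP hA _ YA)).
    move: hX hY; rewrite hg; move: (g Y) => t.
    case=> [hX|hX] [hY|hY].
    + by rewrite hX hY.
    + by apply: anti => //; rewrite hX hY sub1set !inE eqxx orbT.
    + by apply/esym; apply: anti => //; rewrite hX hY sub1set !inE eqxx orbT.
    + by rewrite hX hY.
  by rewrite -[X in _ <= X]card_ord max_card.
- exists (Sing a); split => //; [exact: Sing_anti|exact: card_Sing].
Qed.


Theorem mainTheorem20 (a b : nat) (ha : 0 < a) (hb : 0 < b) :
  (exists (T : finType) (e : rel T),
      [/\ symmetric e, irreflexive e, gammaLD e = a & gammaDLD e = b])
  <-> (a <= b /\ b - a <= 2 ^ a - 1 - 'C(a, uphalf a)).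
Proof.
split.
  by move=> [T [e [_ _ hL hD]]]; exact: forward ha hb hL hD.
move=> [hab hd].
have -> : b = a + (b - a) by rewrite subnKC.
move: hd; set d := b - a => hd.
case: (ltnP d a) => hda; first exact: regime1.
apply: regime2 => //.
clearbody d; move: ha hd hda; clear; case: a => [|[|[|a']]] // _ hd hda.
- by move: hd hda; rewrite /= bin1; lia.
- by move: hd hda; rewrite (_ : 2 ^ 2 - 1 - 2 = 1) //; lia.
Qed.
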